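(* Let $\sigma>0$, $k\ge 0$ an integer, $\rho\ge 0$, and let $\mathcal{O}$ be a finite set of objects in $\mathbb{R}^d$ such that every subset $\mathcal{O}'\subseteq\mathcal{O}$ that is $\sigma$-exposed has density at most $\rho$. If $\mathcal{O}$ is $(\sigma,k)$-exposed, then the density of $\mathcal{O}$ is at most $(2k+1)\rho$.
   Context: For sets $X, Y\subseteq\mathbb{R}^d$ and $\sigma>0$, $X$ $\sigma$-shadows $Y$ if $\max_{q\in Y} \mathrm{dist}(q, X) \le \sigma\cdot \mathrm{diam}(Y)$, where $\mathrm{dist}(q,X)=\min_{p\in X}\|q-p\|$. A set of objects is $\sigma$-exposed if no object in the set $\sigma$-shadows another (distinct) object of the set. A set $\mathcal{O}$ of objects is $(\sigma,k)$-exposed if each object of $\mathcal{O}$ is $\sigma$-shadowed by at most $k$ other objects of $\mathcal{O}$. The density of a finite set $\mathcal{O}$ of objects in $\mathbb{R}^d$ is the maximum, over all closed balls $B$, of the number of objects $o\in\mathcal{O}$ that intersect $B$ and satisfy $\mathrm{diam}(o)\ge \mathrm{diam}(B)$. *)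

(* Defs.v *)
From Stdlib Require Import Reals List.
Open Scope R_scope.

(* Points of R^d are represented by functions nat -> R whose coordinates
   of index >= d vanish (see inRd). *)
Definition Pt := nat -> R.

Definition inRd (d : nat) (x : Pt) : Prop := forall i, (d <= i)%nat -> x i = 0.

Fixpoint sqdist (d : nat) (x y : Pt) : R :=
  match d with
  | O => 0
  | S n => sqdist n x y + (x n - y n) ^ 2
  end.

Definition edist (d : nat) (x y : Pt) : R := sqrt (sqdist d x y).

Definition PSet := Pt -> Prop.

Definition subset_Rd (d : nat) (X : PSet) : Prop := forall x, X x -> inRd d x.

Definition is_diam (d : nat) (Y : PSet) (D : R) : Prop :=
  is_lub (fun r => exists p q, Y p /\ Y q /\ r = edist d p q) D.

(* Objects: nonempty compact (closed and bounded) subsets of R^d *)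
Definition is_closed_set (d : nat) (X : PSet) : Prop :=
  forall x, inRd d x ->
    (forall eps, 0 < eps -> exists p, X p /\ edist d x p < eps) -> X x.

Definition is_bounded_set (d : nat) (X : PSet) : Prop :=
  exists M, forall p q, X p -> X q -> edist d p q <= M.

Definition is_object (d : nat) (X : PSet) : Prop :=
  subset_Rd d X /\ (exists x, X x) /\ is_closed_set d X /\ is_bounded_set d X.

(* X sigma-shadows Y : max_{q in Y} dist(q, X) <= sigma * diam(Y).
   For X compact nonempty, dist(q,X) is attained, so this says: *)
Definition shadows (d : nat) (sigma : R) (X Y : PSet) : Prop :=
  exists D, is_diam d Y D /\
    forall q, Y q -> exists p, X p /\ edist d q p <= sigma * D.

(* Finite sets of objects are duplicate-free lists; a subset of O is a
   duplicate-free list all of whose members are in O. *)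
Definition sub_fam (O' O : list PSet) : Prop := NoDup O' /\ incl O' O.

Definition exposed (d : nat) (sigma : R) (O : list PSet) : Prop :=
  forall X Y, In X O -> In Y O -> X <> Y -> ~ shadows d sigma X Y.

Definition exposed_k (d : nat) (sigma : R) (k : nat) (O : list PSet) : Prop :=
  forall Y, In Y O ->
    forall S, sub_fam S O ->
      (forall X, In X S -> X <> Y /\ shadows d sigma X Y) ->
      (length S <= k)%nat.

Definition closed_ball (d : nat) (c : Pt) (r : R) : PSet :=
  fun x => inRd d x /\ edist d c x <= r.

Definition intersects (X Y : PSet) : Prop := exists x, X x /\ Y x.

Definition density_le (d : nat) (O : list PSet) (rho : R) : Prop :=
  forall (c : Pt) (r : R), inRd d c -> 0 <= r ->
    forall S, sub_fam S O ->
      (forall o, In o S ->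
         intersects o (closed_ball d c r) /\
         exists Do Db, is_diam d o Do /\ is_diam d (closed_ball d c r) Db /\ Db <= Do) ->
      INR (length S) <= rho.

(* Main.v *)
Require Import Defs.
From Stdlib Require Import Bool Reals List Lia Lra ClassicalEpsilon Classical.
Open Scope bool_scope.
Open Scope R_scope.

Section Comb.
Variable U : Type.

Lemma len_split (p : U -> bool) (l : list U) :
  length l = (length (filter p l) + length (filter (fun x => negb (p x)) l))%nat.
Proof. induction l as [|a l IH]; simpl; [reflexivity|]. destruct (p a); simpl; lia. Qed.

Lemma len_or (p q : U -> bool) (l : list U) :
  (length (filter (fun x => p x || q x) l) <= length (filter p l) + length (filter q l))%nat.
Proof. induction l as [|a l IH]; simpl; [lia|]. destruct (p a), (q a); simpl; lia. Qed.

Lemma sum_plus (a b : U -> nat) (l : list U) :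
  list_sum (map (fun v => a v + b v)%nat l) = (list_sum (map a l) + list_sum (map b l))%nat.
Proof. induction l as [|x l IH]; simpl; lia. Qed.

Lemma double_count (f : U -> U -> bool) (A B : list U) :
  list_sum (map (fun a => length (filter (f a) B)) A) =
  list_sum (map (fun b => length (filter (fun a => f a b) A)) B).
Proof.
  induction A as [|a A IH]; simpl.
  - induction B; simpl; auto.
  - rewrite IH.
    assert (H : list_sum (map (fun b => length (if f a b then a :: filter (fun a0 => f a0 b) A
                                              else filter (fun a0 => f a0 b) A)) B)
             = list_sum (map (fun b => (if f a b then 1 else 0) + length (filter (fun a0 => f a0 b) A))%nat B)).
    { f_equal. apply map_ext. intro b. destruct (f a b); reflexivity. }
    rewrite H, sum_plus. f_equal.
    clear H IH. induction B as [|b B IHB]; simpl; auto. destruct (f a b); simpl; rewrite IHB; reflexivity.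
Qed.

Lemma sum_bound (g : U -> nat) (c : nat) (l : list U) :
  (forall x, In x l -> (g x <= c)%nat) -> (list_sum (map g l) <= c * length l)%nat.
Proof.
  induction l as [|x l IH]; simpl; intros H; [lia|].
  assert (g x <= c)%nat by auto. assert (list_sum (map g l) <= c * length l)%nat by auto. nia.
Qed.

Lemma exists_small (g : U -> nat) (c : nat) (l : list U) :
  l <> nil -> (list_sum (map g l) <= c * length l)%nat -> exists v, In v l /\ (g v <= c)%nat.
Proof.
  intros Hn Hs. apply NNPP; intro Hc.
  assert (Hall : forall v, In v l -> (c < g v)%nat).
  { intros v Hv. destruct (Nat.lt_ge_cases c (g v)); auto. exfalso; apply Hc; eauto. }
  revert Hn Hs Hall. clear. induction l as [|x l IH]; intros Hn Hs Hall; [congruence|].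
  simpl in Hs. assert (c < g x)%nat by (apply Hall; simpl; auto).
  destruct l as [|y l'].
  - simpl in Hs. lia.
  - assert (c * length (y :: l') < list_sum (map g (y :: l')))%nat.
    { apply NNPP; intro Hc'. apply IH; [congruence| lia | intros; apply Hall; simpl; auto]. }
    simpl in *. nia.
Qed.

Lemma nodup_eq_count (v : U) (l : list U) :
  NoDup l -> (length (filter (fun x => if excluded_middle_informative (x = v) then true else false) l) <= 1)%nat.
Proof.
  induction 1 as [|a l Hna Hnd IH]; simpl; [lia|].
  destruct (excluded_middle_informative (a = v)) as [->|]; simpl; auto.
  assert (Hz : length (filter (fun x => if excluded_middle_informative (x = v) then true else false) l) = 0%nat).
  { clear IH Hnd. induction l as [|b l IHl]; simpl; auto.
    destruct (excluded_middle_informative (b = v)) as [->|]; simpl.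
    - exfalso; apply Hna; simpl; auto.
    - apply IHl. intro; apply Hna; simpl; auto. }
  lia.
Qed.

Variable E : U -> U -> bool.
Variable O : list U.
Variable k : nat.
Hypothesis Eirr : forall x, E x x = false.
Hypothesis Hin : forall T, NoDup T -> incl T O -> forall Y, In Y T ->
  (length (filter (fun X => E X Y) T) <= k)%nat.

Lemma greedy : forall n T, (length T <= n)%nat -> NoDup T -> incl T O ->
  exists I, NoDup I /\ incl I T /\ (forall X Y, In X I -> In Y I -> E X Y = false) /\
    (length T <= (2 * k + 1) * length I)%nat.
Proof.
  induction n as [|n IH]; intros T Hl Hnd Hinc.
  - destruct T; simpl in Hl; [|lia]. exists nil. repeat split; simpl; auto; try constructor; try lia.
    all: try (intros x []); try (intros X Y []).
  - destruct (classic (T = nil)) as [->|Tnn].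
    + exists nil. repeat split; simpl; auto; try constructor; try lia. all: try (intros x []); try (intros X Y []).
    + 
      set (ind := fun v => length (filter (fun X => E X v) T)).
      set (outd := fun v => length (filter (E v) T)).
      assert (Hs : (list_sum (map (fun v => ind v + outd v)%nat T) <= (2 * k) * length T)%nat).
      { rewrite sum_plus. unfold outd. rewrite double_count. fold ind.
        assert (list_sum (map ind T) <= k * length T)%nat.
        { apply sum_bound. intros x Hx. apply Hin; auto. }
        lia. }
      destruct (exists_small _ _ _ Tnn Hs) as [v [Hv Hg]].
      set (Nb := fun x => (if excluded_middle_informative (x = v) then true else false) || E x v || E v x).
      set (T' := filter (fun x => negb (Nb x)) T).
      assert (Hsplit := len_split Nb T). fold T' in Hsplit.
      assert (HNb : (length (filter Nb T) <= 1 + ind v + outd v)%nat).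
      { unfold Nb.
        eapply Nat.le_trans. apply len_or.
        eapply Nat.le_trans. apply Nat.add_le_mono_r. apply len_or.
        pose proof (nodup_eq_count v T Hnd). unfold ind, outd. lia. }
      assert (Hv1 : (1 <= length (filter Nb T))%nat).
      { destruct (filter Nb T) eqn:Hf; simpl; [|lia].
        assert (In v (filter Nb T)). { apply filter_In. split; auto. unfold Nb.
          destruct (excluded_middle_informative (v = v)); [reflexivity|congruence]. }
        rewrite Hf in H; destruct H. }
      assert (HTsub : incl T' T). { intros x Hx. apply filter_In in Hx. tauto. }
      destruct (IH T') as [I' [HndI [HincI [HindI HlenI]]]].
      { lia. }
      { apply NoDup_filter; auto. }
      { intros x Hx; apply Hinc, HTsub, Hx. }
      assert (Hout : forall y, In y I' -> Nb y = false).
      { intros y Hy. apply HincI in Hy. apply filter_In in Hy. destruct Hy as [_ H].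
        destruct (Nb y); simpl in H; congruence. }
      exists (v :: I'). repeat split.
      * constructor; auto. intro Hvi. apply Hout in Hvi. unfold Nb in Hvi.
        destruct (excluded_middle_informative (v = v)); [discriminate|congruence].
      * intros x [<-|Hx]; auto.
      * intros X Y [<-|HX] [<-|HY]; auto.
        -- apply Hout in HY. unfold Nb in HY. apply orb_false_elim in HY. tauto.
        -- apply Hout in HX. unfold Nb in HX. apply orb_false_elim in HX.
           destruct HX as [HX _]. apply orb_false_elim in HX. tauto.
      * simpl. lia.
Qed.
End Comb.

Definition Esh (d : nat) (sigma : R) (X Y : PSet) : bool :=
  if excluded_middle_informative (X <> Y /\ shadows d sigma X Y) then true else false.

Theorem mainTheorem9 (d : nat) (sigma : R) (k : nat) (rho : R)
  (O : list PSet)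
  (Hsigma : 0 < sigma) (Hrho : 0 <= rho)
  (HO : NoDup O) (Hobj : forall o, In o O -> is_object d o)
  (Hsub : forall O', sub_fam O' O -> exposed d sigma O' -> density_le d O' rho)
  (Hk : exposed_k d sigma k O) :
  density_le d O ((2 * INR k + 1) * rho).
Proof.
  intros c r Hc Hr S [HSnd HSinc] HS.
  assert (Hirr : forall x, Esh d sigma x x = false).
  { intro x. unfold Esh. destruct (excluded_middle_informative _) as [[H _]|]; auto. congruence. }
  assert (Hin : forall T, NoDup T -> incl T O -> forall Y, In Y T ->
    (length (filter (fun X => Esh d sigma X Y) T) <= k)%nat).
  { intros T HT HTi Y HY. apply (Hk Y (HTi Y HY)).
    - split. apply NoDup_filter; auto. intros x Hx. apply filter_In in Hx. apply HTi; tauto.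
    - intros X HX. apply filter_In in HX. destruct HX as [_ HX]. unfold Esh in HX.
      destruct (excluded_middle_informative _); [auto|discriminate]. }
  destruct (greedy _ (Esh d sigma) O k Hirr Hin (length S) S (le_n _) HSnd HSinc)
    as [I [HIn [HIi [HIind HIlen]]]].
  assert (Hd : density_le d I rho).
  { apply Hsub.
    - split; auto. intros x Hx; apply HSinc, HIi, Hx.
    - intros X Y HX HY Hne Hsh. specialize (HIind X Y HX HY). unfold Esh in HIind.
      destruct (excluded_middle_informative _) as [|n]; [discriminate|]. apply n; auto. }
  assert (HI : INR (length I) <= rho).
  { apply (Hd c r Hc Hr I). split; auto. apply incl_refl.
    intros o Ho. apply HS, HIi, Ho. }
  apply le_INR in HIlen. rewrite mult_INR, plus_INR, mult_INR in HIlen. simpl in HIlen.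
  assert (0 <= INR k) by apply pos_INR.
  nra.
Qed.
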